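(* Let $N,k,R$ be positive integers with $N>4kR$, and consider the open chain with sites $1,\dots,N$ and distance $|i-j|$. Let $H$ be an operator (not necessarily Hermitian) on $(\mathbb{C}^2)^{\otimes N}$ that is $k$-local and has range at most $R$. If $H|W^p\rangle=E_p|W^p\rangle$ with $E_p\in\mathbb{C}$ for every $p\in\{0,1,\dots,N\}$, then there exist constants $\Omega,\omega\in\mathbb{C}$ such that $E_p=\Omega+\omega p$ for all $p\in\{0,1,\dots,N\}$ (with $\Omega,\omega\in\mathbb{R}$ if $H$ is Hermitian).
   Context: System of $N$ qubits on sites $1,\dots,N$ with local basis $|0\rangle,|1\rangle$. For each site $i$, $s_i^\dagger$ acts on site $i$ as $s^\dagger|0\rangle=|1\rangle$, $s^\dagger|1\rangle=0$, and $s_i=(s_i^\dagger)^\dagger$ (so $s|1\rangle=|0\rangle$, $s|0\rangle=0$); $n_i=s_i^\dagger s_i$. $|\overline 0\rangle=|0\rangle^{\otimes N}$. Every operator has a unique expansion as a linear combination of normal-ordered strings $s^\dagger_{j_1}\cdots s^\dagger_{j_n}s_{k_1}\cdots s_{k_m}$ (the $j$'s pairwise distinct, the $k$'s pairwise distinct, overlaps between the two sets allowed; the empty string is $I$); the sites of such a string are $\{j_1,\dots,j_n,k_1,\dots,k_m\}$. A string has range $R$, where $R$ is the smallest positive integer such that all pairwise distances between its sites are $<R$. An operator has range at most $R$ if every string with nonzero coefficient in its expansion has range at most $R$; it is $k$-local if every such string involves at most $k$ distinct sites. Dicke states: $S^\dagger=\sum_{i=1}^N s_i^\dagger$ and, for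 $p=0,\dots,N$, $|W^p\rangle=(S^\dagger)^p|\overline 0\rangle/\|(S^\dagger)^p|\overline 0\rangle\|$, i.e. the normalized equal-weight superposition of all basis states with exactly $p$ sites in state $|1\rangle$. *)

(* Defs.v *)
(* Complex scalars: an arbitrary numClosedFieldType C
   (e.g. the complex numbers), with conjugation ^* and sqrtC. *)
From HB Require Import structures.
From mathcomp Require Import all_boot all_order all_algebra.
Set Implicit Arguments. Unset Strict Implicit. Unset Printing Implicit Defensive.
Import Order.TTheory GRing.Theory Num.Theory.
Local Open Scope ring_scope.

Section Qubits.
Variables (C : numClosedFieldType) (N : nat).

(* Computational basis of (C^2)^{⊗N}: a basis state is identified with the
   set of sites in state |1>.  Sites 1..N are represented by 'I_N (0..N-1). *)
Definition state := {set 'I_N} -> C.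
(* An operator is given by its matrix entries  op x y = <x|op|y>. *)
Definition op := {set 'I_N} -> {set 'I_N} -> C.

Definition apply (A : op) (v : state) : state := fun x => \sum_y A x y * v y.
Definition mulop (A B : op) : op := fun x y => \sum_z A x z * B z y.
Definition idop : op := fun x y => (x == y)%:R.

(* s_i^dagger : |0>_i -> |1>_i, |1>_i -> 0 ;  s_i : |1>_i -> |0>_i, |0>_i -> 0 *)
Definition sdag (i : 'I_N) : op := fun x y => ((i \notin y) && (x == i |: y))%:R.
Definition sann (i : 'I_N) : op := fun x y => ((i \in y) && (x == y :\ i))%:R.

(* normal-ordered string  s^dag_{j1}...s^dag_{jn} s_{k1}...s_{km}
   (J = {j1..jn}, K = {k1..km}; factors on distinct sites commute) *)
Definition nstring (J K : {set 'I_N}) : op :=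
  foldr (fun j A => mulop (sdag j) A)
        (foldr (fun k A => mulop (sann k) A) idop (enum K)) (enum J).

Definition expansion (c : {set 'I_N} -> {set 'I_N} -> C) : op :=
  fun x y => \sum_(J : {set 'I_N}) \sum_(K : {set 'I_N}) c J K * nstring J K x y.

Definition dist (i j : 'I_N) : nat := maxn i j - minn i j.

(* H is k-local and has range at most R: in its (unique) normal-ordered
   expansion, every string with nonzero coefficient involves at most k
   distinct sites and all pairwise distances of its sites are < R. *)
Definition klocal_range (H : op) (k R : nat) : Prop :=
  exists c : {set 'I_N} -> {set 'I_N} -> C,
    H = expansion c /\
    forall J K, c J K != 0 ->
      (#|J :|: K| <= k)%N /\
      forall i j, i \in J :|: K -> j \in J :|: K -> (dist i j < R)%N.

Definition hermitian_op (H : op) : Prop := forall x y, H x y = (H y x)^*.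

Definition vac : state := fun x => (x == set0)%:R.
Definition Sdag : op := fun x y => \sum_i sdag i x y.
Definition dicke_un (p : nat) : state := iter p (apply Sdag) vac.
Definition vnorm (v : state) : C := sqrtC (\sum_x `|v x| ^+ 2).
Definition dicke (p : nat) : state :=
  fun x => (vnorm (dicke_un p))^-1 * dicke_un p x.

End Qubits.

(* Main.v *)
Require Import Defs.
From HB Require Import structures.
From mathcomp Require Import all_boot all_order all_algebra.
From mathcomp Require Import zify.
Import Order.TTheory GRing.Theory Num.Theory.
Local Open Scope ring_scope.

Lemma subset_all (T : finType) (A B : {set T}) :
  (A \subset B) = [forall a, (a \in A) ==> (a \in B)].
Proof. by apply/subsetP/forallP => H a; [apply/implyP; apply: H | apply/implyP/H]. Qed.

Lemma eqset_all (T : finType) (A B : {set T}) :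
  (A == B) = [forall a, (a \in A) == (a \in B)].
Proof.
apply/eqP/forallP => [-> a | H]; first by [].
by apply/setP => a; apply/eqP.
Qed.

Lemma disj_all (T : finType) (A B : {set T}) :
  [disjoint A & B] = [forall a, ~~ ((a \in A) && (a \in B))].
Proof.
rewrite -setI_eq0 eqset_all; apply: eq_forallb => a.
by rewrite !inE; case: (a \in A); case: (a \in B).
Qed.

Lemma forall_andb (T : finType) (P Q : pred T) :
  [forall a, P a] && [forall a, Q a] = [forall a, P a && Q a].
Proof.
apply/andP/forallP => [[/forallP hP /forallP hQ] a | h].
  by rewrite hP hQ.
by split; apply/forallP => a; case/andP: (h a).
Qed.

Lemma natrb_and (C : pzSemiRingType) (a b : bool) :
  ((a && b)%:R : C) = a%:R * b%:R.
Proof. by case: a; case: b; rewrite ?mul1r ?mul0r. Qed.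

Lemma sum_eq1 (C : pzSemiRingType) (T : finType) (f : T -> C) (w : T) :
  \sum_z f z * (z == w)%:R = f w.
Proof.
rewrite (bigD1 w) //= eqxx mulr1 big1 ?addr0 // => z /negbTE ->.
by rewrite mulr0.
Qed.

Lemma ann_fold (C : numClosedFieldType) (N : nat) (s : seq 'I_N) :
  uniq s -> forall x y,
  foldr (fun k A => mulop (sann C k) A) (@idop C N) s x y =
  (([set:: s] \subset y) && (x == y :\: [set:: s]))%:R.
Proof.
elim: s => [|k s IH] /=.
  by move=> _ x y; rewrite /idop set_nil sub0set setD0.
case/andP=> hks us x y.
rewrite /mulop /sann.
under eq_bigr => z _ do rewrite IH // [X in _ * X]natrb_and mulrA.
rewrite sum_eq1 -natrb_and set_cons subUset sub1set setDDl setUC.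
rewrite !inE hks /=.
by case: (k \in y); case: ([set:: s] \subset y); case: (x == _).
Qed.

Lemma disjU1 (T : finType) (j : T) (A B : {set T}) :
  [disjoint j |: A & B] = (j \notin B) && [disjoint A & B].
Proof. by rewrite -setI_eq0 setIUl setU_eq0 !setI_eq0 disjoints1. Qed.

Lemma cre_fold (C : numClosedFieldType) (N : nat) (K : {set 'I_N}) (t : seq 'I_N) :
  uniq t -> forall x y,
  foldr (fun j A => mulop (sdag C j) A)
    (foldr (fun k A => mulop (sann C k) A) (@idop C N) (enum K)) t x y =
  ((K \subset y) && [disjoint [set:: t] & y :\: K]
     && (x == [set:: t] :|: (y :\: K)))%:R.
Proof.
elim: t => [|j t IH] /=.
  move=> _ x y; rewrite ann_fold ?enum_uniq // set_enum set_nil set0U.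
  by rewrite -setI_eq0 set0I eqxx andbT.
case/andP=> hjt ut x y.
rewrite /mulop /sdag.
under eq_bigr => z _ do rewrite IH // [X in _ * X]natrb_and mulrA.
rewrite sum_eq1 -natrb_and set_cons disjU1 setUA !inE (negbTE hjt) /=.
by case: (j \in K); case: (j \in y); case: (K \subset y); case: [disjoint _ & _]; case: (x == _).
Qed.

Lemma nstringE (C : numClosedFieldType) (N : nat) (J K x y : {set 'I_N}) :
  nstring C J K x y =
  ((K \subset y) && [disjoint J & y :\: K] && (x == J :|: (y :\: K)))%:R.
Proof. by rewrite /nstring cre_fold ?enum_uniq // set_enum. Qed.

Lemma nstringE2 (C : numClosedFieldType) (N : nat) (J K Z y : {set 'I_N}) :
  nstring C J K Z y =
  ((J \subset Z) && [disjoint Z :\: J & K])%:R * (y == (Z :\: J) :|: K)%:R.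
Proof.
rewrite nstringE -natrb_and; congr (_ %:R); congr (nat_of_bool _).
rewrite !subset_all !eqset_all !disj_all !forall_andb.
apply/forallP/forallP => h a; move: (h a); rewrite !inE;
by case: (a \in J); case: (a \in K); case: (a \in Z); case: (a \in y).
Qed.

Definition Tf (C : numClosedFieldType) (N : nat) (J K Z : {set 'I_N}) : C :=
  \sum_y nstring C J K Z y * (#|y| == #|Z|)%:R.
Arguments Tf C {N}.

Lemma TfE (C : numClosedFieldType) (N : nat) (J K Z : {set 'I_N}) :
  Tf C J K Z = ((J \subset Z) && [disjoint Z :\: J & K] && (#|J| == #|K|))%:R.
Proof.
rewrite /Tf; under eq_bigr => y _ do rewrite nstringE2 mulrAC.
rewrite sum_eq1 -natrb_and; congr (_ %:R); congr (nat_of_bool _).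
case: (boolP (J \subset Z)) => hJ //=; case: (boolP [disjoint _ & _]) => hd //=.
rewrite cardsU; move: (hd); rewrite -setI_eq0 => /eqP ->.
rewrite cards0 subn0 (cardsDS hJ).
have := subset_leq_card hJ.
move: #|J| #|K| #|Z| => a b c h; apply/eqP/eqP; lia.
Qed.

Lemma Tf_loc (C : numClosedFieldType) (N : nat) (J K Z : {set 'I_N}) (i : 'I_N) :
  i \notin J -> i \notin K -> Tf C J K (i |: Z) = Tf C J K Z.
Proof.
move=> hJ hK; rewrite !TfE.
suff -> : (J \subset i |: Z) && [disjoint (i |: Z) :\: J & K] =
          (J \subset Z) && [disjoint Z :\: J & K] by [].
rewrite !subset_all !disj_all !forall_andb.
apply/forallP/forallP => h a; move: (h a); rewrite !inE;
  (case: (eqVneq a i) => [->|_]; [rewrite (negbTE hJ) (negbTE hK) |]);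
  by case: (i \in Z); case: (a \in J); case: (a \in K); case: (a \in Z).
Qed.

Definition Phi (C : numClosedFieldType) (N : nat) (H : op C N) (Z : {set 'I_N}) : C :=
  \sum_y H Z y * (#|y| == #|Z|)%:R.
Arguments Phi {C N}.

Lemma Phi_exp (C : numClosedFieldType) (N : nat) (c : {set 'I_N} -> {set 'I_N} -> C) Z :
  Phi (expansion c) Z = \sum_J \sum_K c J K * Tf C J K Z.
Proof.
rewrite /Phi /expansion /Tf.
under eq_bigr => y _ do rewrite mulr_suml; rewrite exchange_big /=.
apply: eq_bigr => J _.
under eq_bigr => y _ do rewrite mulr_suml; rewrite exchange_big /=.
apply: eq_bigr => K _.
rewrite mulr_sumr; apply: eq_bigr => y _; by rewrite mulrA.
Qed.

Lemma four (C : numClosedFieldType) (N R : nat) (c : {set 'I_N} -> {set 'I_N} -> C)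
  (i j : 'I_N) (x : {set 'I_N}) :
  (forall J K, c J K != 0 ->
      forall a b, a \in J :|: K -> b \in J :|: K -> (dist a b < R)%N) ->
  ~~ (dist i j < R)%N ->
  Phi (expansion c) (i |: (j |: x)) + Phi (expansion c) x =
  Phi (expansion c) (i |: x) + Phi (expansion c) (j |: x).
Proof.
move=> hr hij.
rewrite !Phi_exp -!big_split; apply: eq_bigr => J _.
rewrite -!big_split; apply: eq_bigr => K _ /=.
rewrite -!mulrDr; case: (eqVneq (c J K) 0) => [->|hc]; first by rewrite !mul0r.
congr (_ * _).
case: (boolP (i \in J :|: K)) => hi; case: (boolP (j \in J :|: K)) => hj.
- by move: hij; rewrite (hr J K hc i j hi hj).
- move: hj; rewrite inE negb_or => /andP [hjJ hjK].
  by rewrite [i |: (j |: x)]setUCA (Tf_loc _ _ _ _ _ _ hjJ hjK) (Tf_loc _ _ _ _ _ _ hjJ hjK).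
- move: hi; rewrite inE negb_or => /andP [hiJ hiK].
  by rewrite (Tf_loc _ _ _ _ _ _ hiJ hiK) (Tf_loc _ _ _ _ _ _ hiJ hiK) addrC.
- move: hi; rewrite inE negb_or => /andP [hiJ hiK].
  by rewrite (Tf_loc _ _ _ _ _ _ hiJ hiK) (Tf_loc _ _ _ _ _ _ hiJ hiK) addrC.
Qed.

Definition uu (C : numClosedFieldType) (N p : nat) : state C N :=
  fun x => (#|x| == p)%:R.

Lemma sdagE (C : numClosedFieldType) (N : nat) (i : 'I_N) x y :
  sdag C i x y = (i \in x)%:R * (y == x :\ i)%:R.
Proof.
rewrite /sdag -natrb_and; congr (_ %:R); congr (nat_of_bool _).
apply/andP/andP => [[hi /eqP ->] | [hi /eqP ->]].
  by rewrite setU11 setU1K.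
by rewrite setD11 setD1K.
Qed.

Lemma applyS_u (C : numClosedFieldType) (N p : nat) (x : {set 'I_N}) :
  apply (@Sdag C N) (uu C N p) x = (p.+1)%:R * uu C N p.+1 x.
Proof.
rewrite /apply /Sdag /uu.
under eq_bigr => y _ do rewrite mulr_suml; rewrite exchange_big /=.
under eq_bigr => i _ do (under eq_bigr => y _ do rewrite sdagE mulrAC; rewrite sum_eq1).
have -> : \sum_i (i \in x)%:R * (#|x :\ i| == p)%:R =
          \sum_i (i \in x)%:R * (#|x|.-1 == p)%:R :> C.
  apply: eq_bigr => i _; case: (boolP (i \in x)) => hi; last by rewrite !mul0r.
  by rewrite (cardsD1 i x) hi.
rewrite -mulr_suml -natr_sum.
have -> : (\sum_i (i \in x : nat))%N = #|x|.
  rewrite -sum1_card [RHS]big_mkcond /=; apply: eq_bigr => i _; by case: (i \in x).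
case: #|x| => [|n] /=; first by rewrite !mul0r mulr0.
rewrite eqSS; case: (eqVneq n p) => [->|]; by rewrite ?mulr0.
Qed.

Lemma dicke_unE (C : numClosedFieldType) (N p : nat) (x : {set 'I_N}) :
  dicke_un C p x = (p`!)%:R * uu C N p x.
Proof.
elim: p x => [|p IH] x.
  by rewrite /dicke_un /= /vac /uu mul1r cards_eq0.
rewrite /dicke_un iterS -/(@dicke_un C N p).
rewrite {1}/apply.
under eq_bigr => y _ do rewrite IH mulrCA.
rewrite -mulr_sumr -/(apply (@Sdag C N) (uu C N p) x) applyS_u factS natrM.
by rewrite mulrA [X in X * _]mulrC.
Qed.

Lemma Phi_E (C : numClosedFieldType) (N : nat) (H : op C N) (Ep : C) p (Z : {set 'I_N}) :
  apply H (@dicke C N p) = (fun x => Ep * @dicke C N p x) -> #|Z| = p ->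
  Phi H Z = Ep.
Proof.
move=> hE hZ.
have := congr1 (fun f => f Z) hE; rewrite /apply /dicke /=.
rewrite (dicke_unE _ _ _ Z) [_^-1 * (_ * _)]mulrA /uu hZ eqxx mulr1.
under eq_bigr => y _ do rewrite dicke_unE [_^-1 * _]mulrA mulrCA.
rewrite -mulr_sumr.
set b := (_^-1 * _%:R).
have hb : b != 0.
  have hf : (p`! != 0)%N by rewrite -lt0n fact_gt0.
  rewrite /b mulf_eq0 negb_or invr_eq0 pnatr_eq0 hf andbT.
  rewrite /vnorm sqrtC_eq0 psumr_eq0 => [|i _]; last by rewrite exprn_ge0.
  apply/negP => /allP /(_ Z (mem_index_enum Z)) /=.
  by rewrite dicke_unE /uu hZ eqxx mulr1 sqrf_eq0 normr_eq0 pnatr_eq0 (negbTE hf).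
rewrite [Ep * b]mulrC => /(mulfI hb) <-.
by rewrite /Phi hZ.
Qed.

Lemma exists_sub (T : finType) (A : {set T}) (q : nat) :
  (q <= #|A|)%N -> exists x : {set T}, x \subset A /\ #|x| = q.
Proof.
elim: q => [|q IH] hq.
  by exists set0; rewrite sub0set cards0.
have [x [hxA hx]] := IH (ltnW hq).
have : (0 < #|A :\: x|)%N by rewrite cardsDS // hx subn_gt0.
case/card_gt0P => a; rewrite inE => /andP [hax haA].
exists (a |: x); split.
  by rewrite subUset sub1set haA hxA.
by rewrite cardsU1 hax hx.
Qed.

Lemma real_E (C : numClosedFieldType) (N : nat) (H : op C N) (Ep : C) p :
  (p <= N)%N -> hermitian_op H ->
  (forall Z : {set 'I_N}, #|Z| = p -> Phi H Z = Ep) -> Ep \is Num.real.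
Proof.
move=> hp hh hPhi.
have [Z0 [_ hZ0]] : exists x : {set 'I_N}, x \subset [set: 'I_N] /\ #|x| = p.
  by apply: exists_sub; rewrite cardsT card_ord.
set M : C := \sum_(Z : {set 'I_N}) (#|Z| == p)%:R.
set Sx : C := \sum_(Z : {set 'I_N}) \sum_(y : {set 'I_N}) (#|Z| == p)%:R * H Z y * (#|y| == p)%:R.
have hS : Sx = Ep * M.
  rewrite /Sx /M mulr_sumr; apply: eq_bigr => Z _.
  case: (eqVneq #|Z| p) => hZ; last first.
    by rewrite mulr0 big1 // => y _; rewrite !mul0r.
  rewrite mulr1 -(hPhi Z hZ) /Phi; apply: eq_bigr => y _; by rewrite mul1r hZ.
have hM : M != 0.
  rewrite /M psumr_eq0 => [|i _]; last by rewrite ler0n.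
  apply/negP => /allP /(_ Z0 (mem_index_enum Z0)) /=.
  by rewrite hZ0 eqxx oner_eq0.
have hSr : Sx \is Num.real.
  rewrite CrealE /Sx rmorph_sum /=; apply/eqP.
  rewrite exchange_big /=; apply: eq_bigr => y _.
  rewrite rmorph_sum /=; apply: eq_bigr => Z _.
  by rewrite !rmorphM /= !rmorph_nat -hh mulrAC [RHS]mulrAC [_ * (#|Z| == p)%:R]mulrC.
have -> : Ep = Sx / M by rewrite hS mulfK.
rewrite rpredM // rpredV /M; apply: rpred_sum => Z _; exact: rpred_nat.
Qed.

From mathcomp Require Import ring.

Theorem theorem1 (C : numClosedFieldType) (N k R : nat) (H : op C N)
    (E : nat -> C) :
  (0 < k)%N -> (0 < R)%N -> (4 * k * R < N)%N ->
  klocal_range H k R ->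
  (forall p, (p <= N)%N -> apply H (@dicke C N p) = (fun x => E p * @dicke C N p x)) ->
  exists Om om : C,
    (forall p, (p <= N)%N -> E p = Om + om * p%:R) /\
    (hermitian_op H -> (Om \is Num.real) /\ (om \is Num.real)).
Proof.
move=> hk hR hN [c [hHc hrange]] hE.
have hRN : (R < N)%N by nia.
have hPhi : forall p (Z : {set 'I_N}), (p <= N)%N -> #|Z| = p -> Phi H Z = E p.
  by move=> p Z hp hZ; exact: (Phi_E _ _ _ _ _ _ (hE p hp) hZ).
have hr' : forall J K, c J K != 0 ->
    forall a b, a \in J :|: K -> b \in J :|: K -> (dist a b < R)%N.
  by move=> J K h; case: (hrange J K h).
have h0N : (0 < N)%N by lia.
have h1N : (N.-1 < N)%N by lia.
pose i : 'I_N := Ordinal h0N.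
pose j : 'I_N := Ordinal h1N.
have hij : ~~ (dist i j < R)%N.
  rewrite /dist /= max0n min0n subn0 -leqNgt; lia.
have ineqj : i != j.
  apply/negP => /eqP /(congr1 val) /=; lia.
have hsd : forall q, (q.+2 <= N)%N -> E q.+2 + E q = E q.+1 + E q.+1.
  move=> q hq.
  have [x [hx hxc]] : exists x : {set 'I_N}, x \subset ~: [set i; j] /\ #|x| = q.
    apply: exists_sub; have := cardsC [set i; j]; rewrite cards2 ineqj card_ord /=.
    move: #|_| => m; lia.
  have hix : i \notin x by apply/negP => /(subsetP hx); rewrite !inE eqxx.
  have hjx : j \notin x by apply/negP => /(subsetP hx); rewrite !inE eqxx orbT.
  have e1 : #|i |: (j |: x)| = q.+2.
    by rewrite cardsU1 cardsU1 !inE negb_or ineqj hix hjx hxc.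
  have e2 : #|i |: x| = q.+1 by rewrite cardsU1 hix hxc.
  have e3 : #|j |: x| = q.+1 by rewrite cardsU1 hjx hxc.
  have := four _ _ _ _ _ _ x hr' hij.
  rewrite -hHc (hPhi _ _ hq e1) (hPhi _ _ _ hxc) ?(hPhi _ _ _ e2) ?(hPhi _ _ _ e3) //;
    lia.
have haff : forall p, (p.+1 <= N)%N ->
    E p = E 0%N + (E 1%N - E 0%N) * p%:R /\
    E p.+1 = E 0%N + (E 1%N - E 0%N) * p.+1%:R.
  elim => [|p IH] hp.
    by split; rewrite ?mulr0 ?addr0 // mulr1 addrC subrK.
  have [h1 h2] := IH (ltnW hp).
  split => //.
  have := hsd p hp; rewrite h1 h2 => h.
  apply: (addIr (E 0%N + (E 1%N - E 0%N) * p%:R)); rewrite h.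
  ring.
exists (E 0%N), (E 1%N - E 0%N); split.
  move=> p; case: p => [|p] hp; first by rewrite mulr0 addr0.
  exact: (haff p hp).2.
move=> hh.
have r0 : E 0%N \is Num.real.
  exact: (real_E _ _ _ _ 0%N (leq0n N) hh (fun Z hZ => hPhi 0%N Z (leq0n N) hZ)).
have r1 : E 1%N \is Num.real.
  exact: (real_E _ _ _ _ 1%N h0N hh (fun Z hZ => hPhi 1%N Z h0N hZ)).
by split => //; apply: rpredB.
Qed.
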